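(* Let $S\subseteq\mathbb{N}^{\mathbb{N}}$. Then $S$ is $0$th-order guessable if and only if $S\in\mathbf{\Delta}^0_2$; and for every integer $m>0$, $S$ is $m$th-order guessable if and only if $S\in\mathbf{\Delta}^0_{m+1}$.
   Context: Baire space $\mathbb{N}^{\mathbb{N}}$ carries the product of discrete topologies; $\mathbf{\Sigma}^0_n,\mathbf{\Pi}^0_n,\mathbf{\Delta}^0_n$ are the boldface Borel pointclasses. $\mathbb{N}^{<\mathbb{N}}$ is the set of finite sequences of naturals. The language $\mathscr{L}_{\max}$ is the first-order language (with equality) having: a constant symbol $\overline{n}$ for each $n\in\mathbb{N}$; an $n$-ary function symbol $\tilde w$ for each $w:\mathbb{N}^n\to\mathbb{N}$; an $n$-ary predicate symbol $\tilde p$ for each $p\subseteq\mathbb{N}^n$; a special unary function symbol $\mathbf{f}$; and, for every $n$ and every $G:\mathbb{N}^n\times\mathbb{N}^{<\mathbb{N}}\to\mathbb{N}$, an $(n+1)$-ary function symbol $G\circ\mathbf{f}$. For $f\in\mathbb{N}^{\mathbb{N}}$, $\mathscr{M}_f$ is the structure with universe $\mathbb{N}$ interpreting $\overline n$ as $n$, $\tilde w$ as $w$, $\tilde p$ as $p$, $\mathbf f$ as $f$, and $G\circ\mathbf f$ as $(m_1,\dots,m_n,m)\mapsto G(m_1,\dots,m_n,f(0),\dots,f(m))$. For a sentence $\phi$, $f(\phi)=1$ if $\mathscr{M}_f\models\phi$ and $f(\phi)=0$ otherwise. Formula classes: ''quantifier-free'' means containing no quantifiers at all (not even bounded ones). $\Sigma_0=\Pi_0=\Delta_0$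 is the set of quantifier-free formulas; $\Sigma_{n+1}=\{\exists x\,\phi:\phi\in\Pi_n\}$ and $\Pi_{n+1}=\{\forall x\,\phi:\phi\in\Sigma_n\}$; a formula is $\Delta_{n+1}$ if it is equivalent, in every structure $\mathscr{M}_f$ ($f\in\mathbb{N}^{\mathbb{N}}$), to some $\Sigma_{n+1}$ formula of $\mathscr{L}_{\max}$ and also to some $\Pi_{n+1}$ formula of $\mathscr{L}_{\max}$. For a set $\Sigma$ of symbols of $\mathscr{L}_{\max}$, a sentence ''of $\mathscr{L}_{\max}\cap\Sigma$'' is an $\mathscr{L}_{\max}$-sentence all of whose non-logical symbols lie in $\Sigma$. Definition ($m$th-order guessable): $S\subseteq\mathbb{N}^{\mathbb{N}}$ is $m$th-order guessable if there exist a countable set $\Sigma$ of $\mathscr{L}_{\max}$-symbols, a listing $\phi_0,\phi_1,\dots$ of all $\Delta_m$ sentences of $\mathscr{L}_{\max}\cap\Sigma$, and a function $G:\{0,1\}^{<\mathbb{N}}\to\mathbb{N}$ such that for every $f:\mathbb{N}\to\mathbb{N}$, $\lim_{n\to\infty}G(f(\phi_0),\dots,f(\phi_n))$ equals $1$ if $f\in S$ and $0$ if $f\notin S$. *)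

(* Defs.v *)
From Stdlib Require Import Arith List Fin ClassicalEpsilon.
Import ListNotations.

Definition Baire := nat -> nat.
Definition BSet := Baire -> Prop.

Definition open_set (X : BSet) : Prop :=
  forall f, X f -> exists n, forall g, (forall i, i < n -> g i = f i) -> X g.

(** [BSigma n X] : X is in boldface Sigma^0_n (n >= 1; level 0 is unused).
    Sigma^0_1 = open; Sigma^0_{n+1} = countable unions of Pi^0_n sets;
    Pi^0_n = complements of Sigma^0_n sets. *)
Fixpoint BSigma (n : nat) (X : BSet) : Prop :=
  match n with
  | 0 => False
  | S n' =>
      match n' with
      | 0 => open_set X
      | S _ => exists A : nat -> BSet,
                 (forall k, BSigma n' (fun g => ~ A k g)) /\
                 (forall g, X g <-> exists k, A k g)
      end
  end.

Definition BPi (n : nat) (X : BSet) : Prop := BSigma n (fun g => ~ X g).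
Definition BDelta (n : nat) (X : BSet) : Prop := BSigma n X /\ BPi n X.

Definition vec (n : nat) := Fin.t n -> nat.

Inductive symbol : Type :=
| SyConst (k : nat)
| SyFun (n : nat) (w : vec n -> nat)
| SyPred (n : nat) (p : vec n -> Prop)
| Syf
| SyG (n : nat) (G : vec n -> list nat -> nat).           (* G ∘ f, (n+1)-ary *)

Inductive term : Type :=
| tvar (i : nat)
| tconst (k : nat)
| tfun (n : nat) (w : vec n -> nat) (args : Fin.t n -> term)
| tf (t : term)
| tG (n : nat) (G : vec n -> list nat -> nat) (args : Fin.t n -> term) (t : term).

Inductive formula : Type :=
| fEq (t1 t2 : term)
| fPred (n : nat) (p : vec n -> Prop) (args : Fin.t n -> term)
| fNot (φ : formula)
| fAnd (φ ψ : formula)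
| fOr (φ ψ : formula)
| fImp (φ ψ : formula)
| fEx (x : nat) (φ : formula)
| fAll (x : nat) (φ : formula).

Definition upd (env : nat -> nat) (x a : nat) : nat -> nat :=
  fun y => if Nat.eqb y x then a else env y.

Fixpoint teval (f : Baire) (env : nat -> nat) (t : term) : nat :=
  match t with
  | tvar i => env i
  | tconst k => k
  | tfun n w args => w (fun i => teval f env (args i))
  | tf t => f (teval f env t)
  | tG n G args t =>
      G (fun i => teval f env (args i)) (map f (seq 0 (S (teval f env t))))
  end.

Fixpoint sat (f : Baire) (env : nat -> nat) (φ : formula) : Prop :=
  match φ with
  | fEq t1 t2 => teval f env t1 = teval f env t2
  | fPred n p args => p (fun i => teval f env (args i))
  | fNot φ => ~ sat f env φ
  | fAnd φ ψ => sat f env φ /\ sat f env ψ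
  | fOr φ ψ => sat f env φ \/ sat f env ψ
  | fImp φ ψ => sat f env φ -> sat f env ψ
  | fEx x φ => exists a, sat f (upd env x a) φ
  | fAll x φ => forall a, sat f (upd env x a) φ
  end.

Fixpoint tfree (x : nat) (t : term) : Prop :=
  match t with
  | tvar i => i = x
  | tconst _ => False
  | tfun n _ args => exists i, tfree x (args i)
  | tf t => tfree x t
  | tG n _ args t => (exists i, tfree x (args i)) \/ tfree x t
  end.

Fixpoint ffree (x : nat) (φ : formula) : Prop :=
  match φ with
  | fEq t1 t2 => tfree x t1 \/ tfree x t2
  | fPred _ _ args => exists i, tfree x (args i)
  | fNot φ => ffree x φ
  | fAnd φ ψ | fOr φ ψ | fImp φ ψ => ffree x φ \/ ffree x ψ
  | fEx y φ | fAll y φ => y <> x /\ ffree x φ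
  end.

Definition sentence (φ : formula) : Prop := forall x, ~ ffree x φ.

Fixpoint tsyms_in (Sg : symbol -> Prop) (t : term) : Prop :=
  match t with
  | tvar _ => True
  | tconst k => Sg (SyConst k)
  | tfun n w args => Sg (SyFun n w) /\ forall i, tsyms_in Sg (args i)
  | tf t => Sg Syf /\ tsyms_in Sg t
  | tG n G args t => Sg (SyG n G) /\ (forall i, tsyms_in Sg (args i)) /\ tsyms_in Sg t
  end.

Fixpoint fsyms_in (Sg : symbol -> Prop) (φ : formula) : Prop :=
  match φ with
  | fEq t1 t2 => tsyms_in Sg t1 /\ tsyms_in Sg t2
  | fPred n p args => Sg (SyPred n p) /\ forall i, tsyms_in Sg (args i)
  | fNot φ => fsyms_in Sg φ
  | fAnd φ ψ | fOr φ ψ | fImp φ ψ => fsyms_in Sg φ /\ fsyms_in Sg ψ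
  | fEx _ φ | fAll _ φ => fsyms_in Sg φ
  end.

Fixpoint qfree (φ : formula) : Prop :=
  match φ with
  | fEq _ _ | fPred _ _ _ => True
  | fNot φ => qfree φ
  | fAnd φ ψ | fOr φ ψ | fImp φ ψ => qfree φ /\ qfree ψ
  | fEx _ _ | fAll _ _ => False
  end.

Fixpoint isSigma (n : nat) (φ : formula) : Prop :=
  match n with
  | 0 => qfree φ
  | S n' => match φ with fEx _ ψ => isPi n' ψ | _ => False end
  end
with isPi (n : nat) (φ : formula) : Prop :=
  match n with
  | 0 => qfree φ
  | S n' => match φ with fAll _ ψ => isSigma n' ψ | _ => False end
  end.

Definition equiv_all (φ ψ : formula) : Prop :=
  forall f env, sat f env φ <-> sat f env ψ.

Definition isDelta (m : nat) (φ : formula) : Prop :=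
  match m with
  | 0 => qfree φ
  | S _ => (exists ψ, isSigma m ψ /\ equiv_all φ ψ) /\
           (exists ψ, isPi m ψ /\ equiv_all φ ψ)
  end.

Definition env0 : nat -> nat := fun _ => 0.

Definition fval (f : Baire) (φ : formula) : bool :=
  if excluded_middle_informative (sat f env0 φ) then true else false.

Definition countable_syms (Sg : symbol -> Prop) : Prop :=
  exists e : nat -> symbol, forall s, Sg s -> exists k, e k = s.

Definition guessable (m : nat) (X : BSet) : Prop :=
  exists (Sg : symbol -> Prop) (phi : nat -> formula) (G : list bool -> nat),
    countable_syms Sg /\
    (forall k, isDelta m (phi k) /\ sentence (phi k) /\ fsyms_in Sg (phi k)) /\
    (forall ψ, isDelta m ψ -> sentence ψ -> fsyms_in Sg ψ -> exists k, phi k = ψ) /\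
    (forall f : Baire,
       let v := fun n => G (map (fun k => fval f (phi k)) (seq 0 (S n))) in
       (X f -> exists N, forall n, N <= n -> v n = 1) /\
       (~ X f -> exists N, forall n, N <= n -> v n = 0)).

(* Main.v *)
Require Import Defs.
From Stdlib Require Import Arith List Lia Classical FunctionalExtensionality PropExtensionality ClassicalEpsilon Cantor.
Import ListNotations.

Lemma fchoice {A B : Type} (R : A -> B -> Prop) :
  (forall a, exists b, R a b) -> exists h : A -> B, forall a, R a (h a).
Proof.
  intros H. exists (fun a => proj1_sig (constructive_indefinite_description _ (H a))).
  intros a. exact (proj2_sig (constructive_indefinite_description _ (H a))).
Qed.

Lemma fin_max : forall n (h : Fin.t n -> nat), exists M, forall i, h i <= M.
Proof.
  induction n; intros h.
  - exists 0. intros i. inversion i.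
  - destruct (IHn (fun i => h (Fin.FS i))) as [M HM].
    exists (max M (h Fin.F1)). intros i. pattern i. apply Fin.caseS'.
    + lia.
    + intros p. specialize (HM p). lia.
Qed.

Lemma fin_bound n (P : Fin.t n -> nat -> Prop) :
  (forall i N N', N <= N' -> P i N -> P i N') ->
  (forall i, exists N, P i N) -> exists M, forall i, P i M.
Proof.
  intros Hm H. destruct (fchoice _ H) as [h Hh].
  destruct (fin_max n h) as [M HM]. exists M. intros i. eapply Hm; eauto.
Qed.

Lemma BSigma_ext n (X Y : BSet) : (forall g, X g <-> Y g) -> BSigma n X -> BSigma n Y.
Proof.
  intros H. replace Y with X; auto.
  apply functional_extensionality; intros g; apply propositional_extensionality; auto.
Qed.

Lemma BSig_SS j X : BSigma (S (S j)) X <-> exists A : nat -> BSet,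
  (forall k, BSigma (S j) (fun g => ~ A k g)) /\ (forall g, X g <-> exists k, A k g).
Proof. reflexivity. Qed.

Lemma BSig_1 X : BSigma 1 X <-> open_set X.
Proof. reflexivity. Qed.

Lemma Sig_union2 j X Y : BSigma (S j) X -> BSigma (S j) Y -> BSigma (S j) (fun g => X g \/ Y g).
Proof.
  destruct j.
  - simpl. intros HX HY f [Hf|Hf].
    + destruct (HX f Hf) as [n Hn]. exists n; intros g Hg; left; auto.
    + destruct (HY f Hf) as [n Hn]. exists n; intros g Hg; right; auto.
  - rewrite !BSig_SS. intros [A [HA1 HA2]] [B [HB1 HB2]].
    exists (fun k => match Cantor.of_nat k with (a, b) => if a =? 0 then A b else B b end).
    split.
    + intros k. destruct (Cantor.of_nat k) as [a b]. destruct (a =? 0); auto.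
    + intros g. split.
      * intros [Hg|Hg].
        -- apply HA2 in Hg. destruct Hg as [k Hk]. exists (Cantor.to_nat (0, k)).
           rewrite Cantor.cancel_of_to. simpl. auto.
        -- apply HB2 in Hg. destruct Hg as [k Hk]. exists (Cantor.to_nat (1, k)).
           rewrite Cantor.cancel_of_to. simpl. auto.
      * intros [k Hk]. destruct (Cantor.of_nat k) as [a b]. destruct (a =? 0).
        -- left. apply HA2. eauto.
        -- right. apply HB2. eauto.
Qed.

Lemma Sig_inter2 j X Y : BSigma (S j) X -> BSigma (S j) Y -> BSigma (S j) (fun g => X g /\ Y g).
Proof.
  destruct j.
  - simpl. intros HX HY f [Hf1 Hf2].
    destruct (HX f Hf1) as [n Hn]. destruct (HY f Hf2) as [m Hm].
    exists (max n m); intros g Hg; split; [apply Hn|apply Hm]; intros i Hi; apply Hg; lia.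
  - rewrite !BSig_SS. intros [A [HA1 HA2]] [B [HB1 HB2]].
    exists (fun k g => match Cantor.of_nat k with (a, b) => A a g /\ B b g end).
    split.
    + intros k. destruct (Cantor.of_nat k) as [a b].
      eapply BSigma_ext; [|apply Sig_union2; [apply (HA1 a)|apply (HB1 b)]].
      intros g. simpl. tauto.
    + intros g. split.
      * intros [Hg1 Hg2]. apply HA2 in Hg1. apply HB2 in Hg2.
        destruct Hg1 as [a Ha]; destruct Hg2 as [b Hb]. exists (Cantor.to_nat (a, b)).
        rewrite Cantor.cancel_of_to. auto.
      * intros [k Hk]. destruct (Cantor.of_nat k) as [a b]. destruct Hk.
        split; [apply HA2|apply HB2]; eauto.
Qed.

Lemma Sig_cunion j (A : nat -> BSet) : (forall n, BSigma (S j) (A n)) ->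
  BSigma (S j) (fun g => exists n, A n g).
Proof.
  destruct j.
  - simpl. intros H f [n Hn]. destruct (H n f Hn) as [N HN]. exists N. intros g Hg. exists n. auto.
  - intros H. setoid_rewrite BSig_SS in H.
    destruct (fchoice _ H) as [B HB].
    apply BSig_SS.
    exists (fun k => match Cantor.of_nat k with (a, b) => B a b end).
    split.
    + intros k. destruct (Cantor.of_nat k) as [a b]. apply (proj1 (HB a)).
    + intros g. split.
      * intros [n Hn]. apply (proj2 (HB n)) in Hn. destruct Hn as [k Hk].
        exists (Cantor.to_nat (n, k)). rewrite Cantor.cancel_of_to. auto.
      * intros [k Hk]. destruct (Cantor.of_nat k) as [a b]. exists a.
        apply (proj2 (HB a)). eauto.
Qed.

Lemma Sig_const j : BSigma (S j) (fun _ => True) /\ BSigma (S j) (fun _ => False).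
Proof.
  induction j.
  - simpl. split; intros f Hf; [exists 0; auto | destruct Hf].
  - destruct IHj as [IT IF]. split; apply BSig_SS.
    + exists (fun _ _ => True). split.
      * intros k. eapply BSigma_ext; [|exact IF]. simpl; tauto.
      * intros g. split; [exists 0; auto| auto].
    + exists (fun _ _ => False). split.
      * intros k. eapply BSigma_ext; [|exact IT]. simpl; tauto.
      * intros g. split; [tauto| intros [_ []]].
Qed.

Definition Delta (L : nat) (X : BSet) : Prop := BSigma L X /\ BSigma L (fun g => ~ X g).

Lemma Delta_ext L X Y : (forall g, X g <-> Y g) -> Delta L X -> Delta L Y.
Proof.
  intros H [H1 H2]. split; eapply BSigma_ext; eauto. intros g; simpl; rewrite H; tauto.
Qed.

Lemma Delta_not j X : Delta (S j) X -> Delta (S j) (fun g => ~ X g).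
Proof. intros [H1 H2]. split; auto. eapply BSigma_ext; [|exact H1]. intros; tauto. Qed.

Lemma Delta_and j X Y : Delta (S j) X -> Delta (S j) Y -> Delta (S j) (fun g => X g /\ Y g).
Proof.
  intros [H1 H2] [H3 H4]. split.
  - apply Sig_inter2; auto.
  - eapply BSigma_ext; [|apply (Sig_union2 _ _ _ H2 H4)]. intros g; simpl; tauto.
Qed.

Lemma Delta_or j X Y : Delta (S j) X -> Delta (S j) Y -> Delta (S j) (fun g => X g \/ Y g).
Proof.
  intros [H1 H2] [H3 H4]. split.
  - apply Sig_union2; auto.
  - eapply BSigma_ext; [|apply (Sig_inter2 _ _ _ H2 H4)]. intros g; simpl; tauto.
Qed.

Lemma Delta_const j (P : Prop) : Delta (S j) (fun _ => P).
Proof.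
  destruct (Sig_const j) as [IT IF]. destruct (classic P) as [HP|HP]; split.
  - eapply BSigma_ext; [|exact IT]; simpl; tauto.
  - eapply BSigma_ext; [|exact IF]; simpl; tauto.
  - eapply BSigma_ext; [|exact IF]; simpl; tauto.
  - eapply BSigma_ext; [|exact IT]; simpl; tauto.
Qed.

Lemma Delta_exists_le j (A : nat -> BSet) n : (forall i, Delta (S j) (A i)) ->
  Delta (S j) (fun g => exists i, i <= n /\ A i g).
Proof.
  intros H. induction n.
  - eapply Delta_ext; [|apply (H 0)]. intros g; split; [eauto| intros [i [Hi Hg]]].
    replace i with 0 in Hg by lia; auto.
  - eapply Delta_ext; [|apply (Delta_or _ _ _ IHn (H (S n)))].
    intros g; split.
    + intros [[i [Hi Hg]]|Hg]; [exists i; split; auto; lia| exists (S n); auto].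
    + intros [i [Hi Hg]]. destruct (Nat.eq_dec i (S n)); [subst; auto|left; exists i; split; auto; lia].
Qed.

Lemma Delta_forall_lt j (A : nat -> BSet) n : (forall i, Delta (S j) (A i)) ->
  Delta (S j) (fun g => forall i, i < n -> A i g).
Proof.
  intros H. induction n.
  - eapply Delta_ext; [|apply (Delta_const j True)]. intros g; split; auto; intros; lia.
  - eapply Delta_ext; [|apply (Delta_and _ _ _ IHn (H n))].
    intros g; split.
    + intros [H1 H2] i Hi. destruct (Nat.eq_dec i n); [subst; auto| apply H1; lia].
    + intros H1; split; auto.
Qed.

Lemma term_cont : forall t f env, exists N, forall g, (forall i, i < N -> g i = f i) ->
  teval g env t = teval f env t.
Proof.
  induction t as [i|k|n w args IH|t IH|n G0 args IH t IHt]; intros f env.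
  - exists 0; auto.
  - exists 0; auto.
  - destruct (fin_bound n (fun i N => forall g, (forall x, x < N -> g x = f x) ->
       teval g env (args i) = teval f env (args i))) as [M HM].
    + intros i N N' HN H g Hg. apply H. intros; apply Hg; lia.
    + intros i; apply IH.
    + exists M. intros g Hg. simpl. f_equal. apply functional_extensionality. intros i. apply HM; auto.
  - destruct (IH f env) as [N HN]. exists (max N (S (teval f env t))).
    intros g Hg. simpl. rewrite HN by (intros; apply Hg; lia). apply Hg; lia.
  - destruct (fin_bound n (fun i N => forall g, (forall x, x < N -> g x = f x) ->
       teval g env (args i) = teval f env (args i))) as [M HM].
    + intros i N N' HN H g Hg. apply H. intros; apply Hg; lia.
    + intros i; apply IH.
    + destruct (IHt f env) as [N HN]. exists (max M (max N (S (teval f env t)))).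
      intros g Hg. simpl. rewrite HN by (intros; apply Hg; lia).
      replace (fun i => teval g env (args i)) with (fun i => teval f env (args i)).
      * f_equal. change (map g (seq 0 (S (teval f env t))) = map f (seq 0 (S (teval f env t)))).
        apply map_ext_in. intros a Ha. apply in_seq in Ha. apply Hg; lia.
      * apply functional_extensionality. intros i. symmetry. apply HM; intros; apply Hg; lia.
Qed.

Lemma qf_cont : forall φ, qfree φ -> forall f env, exists N, forall g,
  (forall i, i < N -> g i = f i) -> (sat g env φ <-> sat f env φ).
Proof.
  induction φ as [t1 t2|n p args|φ IH|φ IH1 ψ IH2|φ IH1 ψ IH2|φ IH1 ψ IH2|x φ IH|x φ IH];
    simpl; intros Hq f env; try contradiction.
  - destruct (term_cont t1 f env) as [N1 H1]. destruct (term_cont t2 f env) as [N2 H2].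
    exists (max N1 N2). intros g Hg. rewrite H1, H2 by (intros; apply Hg; lia). tauto.
  - destruct (fin_bound n (fun i N => forall g, (forall x, x < N -> g x = f x) ->
       teval g env (args i) = teval f env (args i))) as [M HM].
    + intros i N N' HN H g Hg. apply H. intros; apply Hg; lia.
    + intros i; apply term_cont.
    + exists M. intros g Hg.
      replace (fun i => teval g env (args i)) with (fun i => teval f env (args i)); [tauto|].
      apply functional_extensionality. intros i. symmetry. apply HM; auto.
  - destruct (IH Hq f env) as [N HN]. exists N. intros g Hg. rewrite HN; tauto.
  - destruct Hq as [Hq1 Hq2]. destruct (IH1 Hq1 f env) as [N1 H1]. destruct (IH2 Hq2 f env) as [N2 H2].
    exists (max N1 N2). intros g Hg. rewrite H1, H2 by (intros; apply Hg; lia). tauto.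
  - destruct Hq as [Hq1 Hq2]. destruct (IH1 Hq1 f env) as [N1 H1]. destruct (IH2 Hq2 f env) as [N2 H2].
    exists (max N1 N2). intros g Hg. rewrite H1, H2 by (intros; apply Hg; lia). tauto.
  - destruct Hq as [Hq1 Hq2]. destruct (IH1 Hq1 f env) as [N1 H1]. destruct (IH2 Hq2 f env) as [N2 H2].
    exists (max N1 N2). intros g Hg. rewrite H1, H2 by (intros; apply Hg; lia). tauto.
Qed.

Lemma qf_delta φ env : qfree φ -> Delta 1 (fun f => sat f env φ).
Proof.
  intros Hq. split; simpl; intros f Hf; destruct (qf_cont φ Hq f env) as [N HN];
  exists N; intros g Hg; rewrite HN; auto.
Qed.

Lemma form_sets : forall r φ env,
  (isSigma (S r) φ -> BSigma (S r) (fun f => sat f env φ)) /\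
  (isPi (S r) φ -> BSigma (S r) (fun f => ~ sat f env φ)).
Proof.
  induction r; intros φ env; split; intros H; destruct φ; simpl in H; try contradiction.
  - eapply BSigma_ext; [|apply (Sig_cunion 0 (fun a f => sat f (upd env x a) φ))].
    + simpl; tauto.
    + intros a. apply (qf_delta φ (upd env x a) H).
  - eapply BSigma_ext; [|apply (Sig_cunion 0 (fun a f => ~ sat f (upd env x a) φ))].
    + intros g; simpl. split; [intros [a Ha] Hc; apply Ha, Hc|]. intros Hn.
      apply not_all_ex_not in Hn. exact Hn.
    + intros a. apply (qf_delta φ (upd env x a) H).
  - apply BSig_SS. exists (fun a f => sat f (upd env x a) φ). split.
    + intros a. apply (proj2 (IHr φ (upd env x a))). exact H.
    + intros g; simpl; tauto.
  - apply BSig_SS. exists (fun a f => ~ sat f (upd env x a) φ). split.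
    + intros a. eapply BSigma_ext; [|apply (proj1 (IHr φ (upd env x a))); exact H].
      intros g; simpl; tauto.
    + intros g; simpl. split; [|intros [a Ha] Hc; apply Ha, Hc]. intros Hn.
      apply not_all_ex_not in Hn. exact Hn.
Qed.

Lemma fval_true f φ : fval f φ = true <-> sat f env0 φ.
Proof. unfold fval. destruct (excluded_middle_informative (sat f env0 φ)); split; congruence || tauto. Qed.

Lemma delta_sets m φ : isDelta m φ -> Delta (S (pred m)) (fun f => sat f env0 φ).
Proof.
  destruct m as [|r]; simpl.
  - apply qf_delta.
  - intros [[ψ [H1 H2]] [ψ' [H3 H4]]]. split.
    + eapply BSigma_ext; [|apply (proj1 (form_sets r ψ env0)); exact H1]. intros g; simpl; rewrite (H2 g env0); tauto.
    + eapply BSigma_ext; [|apply (proj2 (form_sets r ψ' env0)); exact H3]. intros g; simpl; rewrite (H4 g env0); tauto.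
Qed.

Lemma boolmap_delta j (phi : nat -> formula) :
  (forall k, Delta (S j) (fun f => sat f env0 (phi k))) ->
  forall ks (H : list bool -> Prop), Delta (S j) (fun f => H (map (fun k => fval f (phi k)) ks)).
Proof.
  intros Hd. induction ks as [|k ks IH]; intros H.
  - simpl. apply Delta_const.
  - simpl. eapply Delta_ext; [|apply (Delta_or _ _ _
        (Delta_and _ _ _ (Hd k) (IH (fun l => H (true :: l))))
        (Delta_and _ _ _ (Delta_not _ _ (Hd k)) (IH (fun l => H (false :: l)))))].
    intros g. simpl. rewrite <- fval_true.
    destruct (fval g (phi k)); intuition congruence.
Qed.

Lemma guess_to_borel j (phi : nat -> formula) (G : list bool -> nat) (X : BSet) :
  (forall k, Delta (S j) (fun f => sat f env0 (phi k))) ->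
  (forall f : Baire,
       let v := fun n => G (map (fun k => fval f (phi k)) (seq 0 (S n))) in
       (X f -> exists N, forall n, N <= n -> v n = 1) /\
       (~ X f -> exists N, forall n, N <= n -> v n = 0)) ->
  BDelta (S (S j)) X.
Proof.
  intros Hd Hs.
  set (V := fun n f => G (map (fun k => fval f (phi k)) (seq 0 (S n)))).
  assert (HV : forall n (P : nat -> Prop), Delta (S j) (fun f => P (V n f))).
  { intros n P. apply (boolmap_delta j phi Hd (seq 0 (S n)) (fun l => P (G l))). }
  assert (E1 : forall f, X f <-> exists N, forall n, N <= n -> V n f = 1).
  { intros f. split; [apply (Hs f)|]. intros [N HN]. apply NNPP. intros Hn.
    destruct (proj2 (Hs f) Hn) as [N' HN']. specialize (HN (max N N')). specialize (HN' (max N N')).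
    unfold V in HN. rewrite HN' in HN by lia. discriminate HN; lia. }
  assert (E0 : forall f, ~ X f <-> exists N, forall n, N <= n -> V n f = 0).
  { intros f. split; [apply (Hs f)|]. intros [N HN] Hx.
    destruct (proj1 (Hs f) Hx) as [N' HN']. specialize (HN (max N N')). specialize (HN' (max N N')).
    unfold V in HN. rewrite HN' in HN by lia. discriminate HN; lia. }
  assert (Gen : forall c (Y : BSet), (forall f, Y f <-> exists N, forall n, N <= n -> V n f = c) ->
            BSigma (S (S j)) Y).
  { intros c Y HY. apply BSig_SS. exists (fun N f => forall n, N <= n -> V n f = c). split.
    - intros N. eapply BSigma_ext; [|apply (Sig_cunion j (fun n f => N <= n /\ ~ V n f = c))].
      + intros g; split; [intros [n [H1 H2]] Hc; apply H2, Hc; auto|].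
        intros Hn. apply NNPP; intros Hc. apply Hn. intros n Hn'. apply NNPP; intros Hc'.
        apply Hc. exists n. auto.
      + intros n. apply (Delta_and _ _ _ (Delta_const j (N <= n)) (HV n (fun x => ~ x = c))).
    - exact HY. }
  split.
  - apply (Gen 1); auto.
  - apply (Gen 0); auto.
Qed.

Lemma ev2 k : Nat.even (2*k) = true. Proof. rewrite Nat.even_mul. reflexivity. Qed.
Lemma od2 k : Nat.even (2*k+1) = false. Proof. rewrite Nat.even_add, Nat.even_mul. reflexivity. Qed.
Lemma dv2 k : Nat.div2 (2*k+1) = k. Proof. apply Nat.div2_odd'. Qed.
Lemma dvb n : 2 * Nat.div2 n <= n /\ n <= 2 * Nat.div2 n + 1.
Proof. pose proof (Nat.div2_odd n). destruct (Nat.odd n); simpl in H; lia. Qed.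

Lemma map_agree (f g : Baire) k : (forall i, i < k -> g i = f i) ->
  map g (seq 0 k) = map f (seq 0 k).
Proof. intros H. apply map_ext_in. intros a Ha. apply in_seq in Ha. apply H; lia. Qed.

Lemma map_eq_agree (f g : Baire) : forall k s, map g (seq s k) = map f (seq s k) ->
  forall i, s <= i < s + k -> g i = f i.
Proof.
  induction k; intros s H i Hi; [lia|]. simpl in H. injection H as H1 H2.
  destruct (Nat.eq_dec i s); [subst; auto|]. apply (IHk (S s)); auto; lia.
Qed.

Lemma prefix_delta k (P : list nat -> Prop) : Delta 1 (fun f => P (map f (seq 0 k))).
Proof.
  split; simpl; intros f Hf; exists k; intros g Hg; rewrite (map_agree f g k Hg); auto.
Qed.

Lemma open_prefix (U : BSet) : open_set U ->
  exists H : list nat -> Prop, forall f, U f <-> exists j, H (map f (seq 0 (S j))).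
Proof.
  intros HU. exists (fun l => forall g, map g (seq 0 (length l)) = l -> U g).
  intros f. split.
  - intros Hf. destruct (HU f Hf) as [N HN]. exists N. intros g Hg.
    rewrite length_map, length_seq in Hg. apply HN. intros i Hi.
    apply (map_eq_agree f g (S N) 0 Hg). lia.
  - intros [j Hj]. apply Hj. rewrite length_map, length_seq. auto.
Qed.

Lemma Inc1 j Y : BSigma (S j) (fun g => ~ Y g) -> BSigma (S (S j)) Y.
Proof. intros H. apply BSig_SS. exists (fun _ => Y). split; auto. intros g; split; [exists 0|intros [_ ?]]; auto. Qed.

Lemma Inc2 j : forall Y, BSigma (S j) Y -> BSigma (S (S j)) Y.
Proof.
  induction j; intros Y HY.
  - destruct (open_prefix Y HY) as [H HH]. apply BSig_SS.
    exists (fun j f => H (map f (seq 0 (S j)))). split; auto.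
    intros k. apply (prefix_delta (S k) H).
  - apply BSig_SS in HY. destruct HY as [A [HA1 HA2]]. apply BSig_SS.
    exists A. split; auto.
Qed.

Lemma Dec r X : BSigma (S r) (fun g => ~ X g) ->
  exists C : nat -> BSet, (forall j, Delta (S r) (C j)) /\ (forall f, X f <-> forall j, C j f).
Proof.
  destruct r.
  - intros HU. destruct (open_prefix _ HU) as [H HH].
    exists (fun j f => ~ H (map f (seq 0 (S j)))). split.
    + intros j. apply Delta_not. apply prefix_delta.
    + intros f. split.
      * intros Hf j Hj. apply (proj2 (HH f)); eauto.
      * intros Hj. apply NNPP. intros Hn. apply HH in Hn. destruct Hn as [j Hn]. apply (Hj j); auto.
  - intros HS. apply BSig_SS in HS. destruct HS as [A [HA1 HA2]].
    exists (fun k g => ~ A k g). split.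
    + intros k. split.
      * apply Inc2. apply HA1.
      * apply Inc1. eapply BSigma_ext; [|apply (HA1 k)]. intros g; simpl; tauto.
    + intros f. split.
      * intros Hf k Hk. apply (proj2 (HA2 f)); eauto.
      * intros Hk. apply NNPP. intros Hf. apply HA2 in Hf. destruct Hf as [k Hf]. apply (Hk k Hf).
Qed.

Lemma Dec0 X : BSigma 1 (fun g => ~ X g) ->
  exists H : list nat -> Prop, forall f, X f <-> forall j, ~ H (map f (seq 0 (S j))).
Proof.
  intros HU. destruct (open_prefix _ HU) as [H HH]. exists H.
  intros f. split.
  - intros Hf j Hj. apply (proj2 (HH f)); eauto.
  - intros Hj. apply NNPP. intros Hn. apply HH in Hn. destruct Hn as [j Hn]. apply (Hj j); auto.
Qed.

Lemma least_ex (P : nat -> Prop) : forall n, P n -> exists i, P i /\ forall i', i' < i -> ~ P i'.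
Proof.
  intros n. induction n as [n IH] using (well_founded_induction lt_wf). intros Hn.
  destruct (classic (exists i', i' < n /\ P i')) as [[i' [H1 H2]]|Hno].
  - apply (IH i' H1 H2).
  - exists n. split; auto. intros i' Hi' Hp. apply Hno; eauto.
Qed.

Lemma bound_below (Q : nat -> nat -> Prop) : forall k, (forall i, i < k -> exists j, Q i j) ->
  exists M, forall i, i < k -> exists j, j <= M /\ Q i j.
Proof.
  induction k; intros H.
  - exists 0; intros; lia.
  - destruct IHk as [M HM]; [intros; apply H; lia|]. destruct (H k) as [j Hj]; [lia|].
    exists (max M j). intros i Hi. destruct (Nat.eq_dec i k).
    + subst. exists j; split; auto; lia.
    + destruct (HM i) as [j' [Hj'1 Hj'2]]; [lia|]. exists j'; split; auto; lia.
Qed.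

Section Constr.
Variable (X : BSet) (P Q : nat -> nat -> BSet).
Hypothesis HP : forall f, X f <-> exists k, forall j, P k j f.
Hypothesis HQ : forall f, ~ X f <-> exists k, forall j, Q k j f.

Definition Cc (i j : nat) : BSet := if Nat.even i then P (Nat.div2 i) j else Q (Nat.div2 i) j.
Definition Rn (i n : nat) (f : Baire) : Prop := forall j, j < S n -> Cc i j f.
Definition Dn (n : nat) (f : Baire) : Prop :=
  exists i, i <= n /\ (Nat.even i = true /\ Rn i n f /\ forall i', i' < i -> ~ Rn i' n f).

Lemma constr_conv f : (X f -> exists N, forall n, N <= n -> Dn n f) /\
                      (~ X f -> exists N, forall n, N <= n -> ~ Dn n f).
Proof.
  assert (Hex : exists i, forall j, Cc i j f).
  { destruct (classic (X f)) as [Hx|Hx].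
    - apply HP in Hx. destruct Hx as [k Hk]. exists (2*k). unfold Cc. rewrite ev2, Nat.div2_double. auto.
    - apply HQ in Hx. destruct Hx as [k Hk]. exists (2*k+1). unfold Cc. rewrite od2, dv2. auto. }
  destruct Hex as [i1 Hi1].
  destruct (least_ex (fun i => forall j, Cc i j f) i1 Hi1) as [i0 [H0 Hlt]].
  destruct (bound_below (fun i j => ~ Cc i j f) i0) as [M HM].
  { intros i Hi. apply not_all_ex_not. apply Hlt; auto. }
  assert (Key : forall n, max i0 M <= n -> (Dn n f <-> Nat.even i0 = true)).
  { intros n Hn. assert (R0 : Rn i0 n f) by (intros j _; apply H0).
    assert (Rl : forall i', i' < i0 -> ~ Rn i' n f).
    { intros i' Hi' Hr. destruct (HM i' Hi') as [j [Hj1 Hj2]]. apply Hj2, Hr. lia. }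
    split.
    - intros [i [Hi [He [Hr Hl]]]].
      destruct (lt_eq_lt_dec i i0) as [[Hc|Hc]|Hc].
      + exfalso; apply (Rl i Hc Hr).
      + subst; auto.
      + exfalso; apply (Hl i0 Hc R0).
    - intros He. exists i0. repeat split; auto. lia. }
  split.
  - intros Hx. exists (max i0 M). intros n Hn. apply Key; auto.
    destruct (Nat.even i0) eqn:E; auto. exfalso.
    apply (proj2 (HQ f)); auto. exists (Nat.div2 i0). intros j. specialize (H0 j). unfold Cc in H0.
    rewrite E in H0. auto.
  - intros Hx. exists (max i0 M). intros n Hn HD. apply (Key n Hn) in HD.
    apply Hx, HP. exists (Nat.div2 i0). intros j. specialize (H0 j). unfold Cc in H0.
    rewrite HD in H0. auto.
Qed.

Lemma constr_delta j : (forall k l, Delta (S j) (P k l)) -> (forall k l, Delta (S j) (Q k l)) ->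
  forall n, Delta (S j) (Dn n).
Proof.
  intros H1 H2 n.
  assert (HC : forall i l, Delta (S j) (Cc i l)).
  { intros i l. unfold Cc. destruct (Nat.even i); auto. }
  assert (HR : forall i, Delta (S j) (Rn i n)).
  { intros i. apply (Delta_forall_lt j (fun l => Cc i l) (S n)). auto. }
  apply (Delta_exists_le j (fun i f => Nat.even i = true /\ Rn i n f /\ forall i', i' < i -> ~ Rn i' n f)).
  intros i. apply Delta_and; [apply Delta_const|]. apply Delta_and; auto.
  apply (Delta_forall_lt j (fun i' f => ~ Rn i' n f)). intros; apply Delta_not; auto.
Qed.

Lemma constr_prefix :
  (forall k l f g, (forall x, x < S l -> g x = f x) -> (P k l f <-> P k l g)) ->
  (forall k l f g, (forall x, x < S l -> g x = f x) -> (Q k l f <-> Q k l g)) ->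
  forall n f g, (forall x, x < S n -> g x = f x) -> (Dn n f <-> Dn n g).
Proof.
  intros H1 H2 n f g Hfg.
  assert (HR : forall i, Rn i n f <-> Rn i n g).
  { intros i. unfold Rn, Cc. split; intros H l Hl; specialize (H l Hl);
    destruct (Nat.even i); first [apply (H1 _ l f g) | apply (H2 _ l f g)]; auto;
    intros x Hx; apply Hfg; lia. }
  unfold Dn. split; intros [i [Hi [He [Hr Hl]]]]; exists i; repeat split; auto;
  try (apply HR; auto); intros i' Hi' Hr'; apply (Hl i' Hi'); apply HR; auto.
Qed.
End Constr.

Fixpoint Qs (b : bool) (d r : nat) (φ : formula) : formula :=
  match r with
  | 0 => φ
  | S r' => if b then fEx d (Qs (negb b) (S d) r' φ) else fAll d (Qs (negb b) (S d) r' φ)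
  end.

Definition atom (n : nat) (G : vec n -> list nat -> nat) : formula :=
  fEq (tG n G (fun i => tvar (proj1_sig (Fin.to_nat i))) (tvar n)) (tconst 0).

Definition flip {n} (G : vec n -> list nat -> nat) : vec n -> list nat -> nat :=
  fun v l => if G v l =? 0 then 1 else 0.

Lemma Qs_S f env d r φ : sat f env (Qs true d (S r) φ) <-> exists a, sat f (upd env d a) (Qs false (S d) r φ).
Proof. reflexivity. Qed.

Lemma Qs_cong f : forall r b d φ ψ env,
  (forall env', (forall x, x < d -> env' x = env x) -> (sat f env' φ <-> sat f env' ψ)) ->
  (sat f env (Qs b d r φ) <-> sat f env (Qs b d r ψ)).
Proof.
  induction r; intros b d φ ψ env H.
  - apply H. auto.
  - assert (E : forall a, sat f (upd env d a) (Qs (negb b) (S d) r φ) <->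
                          sat f (upd env d a) (Qs (negb b) (S d) r ψ)).
    { intros a. apply IHr. intros env' He. apply H. intros x Hx. rewrite He by lia.
      unfold upd. destruct (Nat.eqb_spec x d); [lia|auto]. }
    destruct b; simpl; setoid_rewrite E; tauto.
Qed.

Lemma Qs_neg f n (G : vec n -> list nat -> nat) : forall r b d env,
  sat f env (Qs (negb b) d r (atom n (flip G))) <-> ~ sat f env (Qs b d r (atom n G)).
Proof.
  induction r; intros b d env.
  - simpl. unfold flip. destruct (_ =? 0) eqn:E.
    + apply Nat.eqb_eq in E. rewrite E. split; intros H; [discriminate|]. exfalso; auto.
    + apply Nat.eqb_neq in E. tauto.
  - destruct b; simpl.
    + pose proof (IHr false) as E; simpl in E. setoid_rewrite E. split; [intros H [a Ha]; apply (H a Ha)|].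
      intros H a Ha. apply H. eauto.
    + pose proof (IHr true) as E; simpl in E. setoid_rewrite E. split; [intros [a Ha] Hc; apply Ha, Hc|].
      intros H. apply not_all_ex_not in H. exact H.
Qed.

Lemma NF : forall r d n X, n = d + r -> BSigma (S r) X ->
  exists G : vec n -> list nat -> nat, forall f env, X f <-> sat f env (Qs true d (S r) (atom n G)).
Proof.
  induction r; intros d n X Hn HX.
  - destruct (open_prefix X HX) as [H HH].
    exists (fun v l => if excluded_middle_informative (H l) then 0 else 1).
    intros f env. subst n. rewrite HH. simpl.
    assert (Eu : forall a, upd env d a (d+0) = a).
    { intros a; unfold upd. replace (d + 0 =? d) with true by (symmetry; apply Nat.eqb_eq; lia). auto. }
    split; intros [j Hj]; exists j; rewrite ?Eu in *;
      destruct (excluded_middle_informative _); simpl in *; auto; try discriminate; contradiction.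
  - apply BSig_SS in HX. destruct HX as [A [HA1 HA2]].
    assert (HPi : forall k, exists Gk : vec n -> list nat -> nat, forall f env,
               A k f <-> sat f env (Qs false (S d) (S r) (atom n Gk))).
    { intros k. destruct (IHr (S d) n (fun g => ~ A k g)) as [Gk HGk]; [lia|apply HA1|].
      exists (flip Gk). intros f env. rewrite (Qs_neg f n Gk (S r) true (S d) env).
      rewrite <- HGk. tauto. }
    destruct (fchoice _ HPi) as [Gf HGf].
    assert (Hd : d < n) by lia.
    exists (fun v l => Gf (v (Fin.of_nat_lt Hd)) v l).
    intros f env. rewrite HA2.
    assert (E : forall a, A a f <-> sat f (upd env d a) (Qs false (S d) (S r) (atom n (fun v l => Gf (v (Fin.of_nat_lt Hd)) v l)))).
    2:{ rewrite Qs_S. split; intros [a Ha]; exists a; apply E; auto. }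
    intros a. rewrite (HGf a f (upd env d a)).
    apply Qs_cong. intros env' He. simpl.
    rewrite Fin.to_nat_of_nat. simpl. rewrite (He d) by lia. unfold upd. rewrite Nat.eqb_refl. tauto.
Qed.

Lemma NFPi r d n X : n = d + r -> BSigma (S r) (fun g => ~ X g) ->
  exists G : vec n -> list nat -> nat, forall f env, X f <-> sat f env (Qs false d (S r) (atom n G)).
Proof.
  intros Hn HX. destruct (NF r d n _ Hn HX) as [G HG]. exists (flip G).
  intros f env. rewrite (Qs_neg f n G (S r) true d env). rewrite <- HG. split; [tauto|].
  intros H. apply NNPP. auto.
Qed.

Lemma free_Qs x : forall k b d φ, ffree x (Qs b d k φ) -> (x < d \/ d + k <= x) /\ ffree x φ.
Proof.
  induction k; intros b d φ H.
  - split; auto. lia.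
  - destruct b; simpl in H; destruct H as [H1 H2]; apply IHk in H2; destruct H2; split; auto; lia.
Qed.

Lemma free_atom x n G : ffree x (atom n G) -> x <= n.
Proof.
  simpl. intros [[[i Hi]|Hi]|[]]; simpl in Hi.
  - pose proof (proj2_sig (Fin.to_nat i)). simpl in H. lia.
  - lia.
Qed.

Lemma Qs_sentence b r G : sentence (Qs b 0 (S r) (atom r G)).
Proof.
  intros x H. apply free_Qs in H. destruct H as [H1 H2]. apply free_atom in H2. lia.
Qed.

Lemma Qs_class : forall k d φ, qfree φ -> isSigma k (Qs true d k φ) /\ isPi k (Qs false d k φ).
Proof.
  induction k; intros d φ H.
  - simpl. auto.
  - simpl. split; apply IHk; auto.
Qed.

Lemma Qs_syms Sg : forall k b d φ, fsyms_in Sg φ -> fsyms_in Sg (Qs b d k φ).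
Proof. induction k; intros b d φ H; [auto|]. destruct b; simpl; auto. Qed.

Definition NSg (sym : nat -> symbol) (s : symbol) : Prop :=
  (exists k, s = SyConst k) \/ (exists n, s = sym n).

Lemma delta_def r D : Delta (S r) D ->
  exists G : vec r -> list nat -> nat,
    isDelta (S r) (Qs true 0 (S r) (atom r G)) /\
    (forall f, sat f env0 (Qs true 0 (S r) (atom r G)) <-> D f).
Proof.
  intros [H1 H2].
  destruct (NF r 0 r D eq_refl H1) as [G HG].
  destruct (NFPi r 0 r D eq_refl H2) as [G' HG'].
  exists G. split.
  - split.
    + exists (Qs true 0 (S r) (atom r G)). split; [apply Qs_class; simpl; auto|].
      intros f env; tauto.
    + exists (Qs false 0 (S r) (atom r G')). split; [apply Qs_class; simpl; auto|].
      intros f env. rewrite <- HG, <- HG'. tauto.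
  - intros f. rewrite (HG f env0). tauto.
Qed.

Definition qfs (n : nat) (H : list nat -> nat) : formula :=
  fEq (tG 0 (fun _ l => H l) (fun i => Fin.case0 (fun _ => term) i) (tconst n)) (tconst 0).

Lemma qfs_def n (D : BSet) :
  (forall f g, (forall x, x < S n -> g x = f x) -> (D f <-> D g)) ->
  exists H, forall f, sat f env0 (qfs n H) <-> D f.
Proof.
  intros HD.
  exists (fun l => if excluded_middle_informative (exists g, map g (seq 0 (S n)) = l /\ D g) then 0 else 1).
  intros f. simpl. destruct (excluded_middle_informative _) as [[g [Hg1 Hg2]]|Hn].
  - split; auto. intros _. apply (HD g f); auto. intros x Hx.
    apply (map_eq_agree g f (S n) 0); auto. lia.
  - split; [discriminate|]. intros Hf. exfalso. apply Hn. eauto.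
Qed.

Lemma qfs_sentence n H : sentence (qfs n H).
Proof. intros x. simpl. intros [[[i _]|[]]|[]]. inversion i. Qed.

Fixpoint decn (len c : nat) : list nat :=
  match len with
  | 0 => []
  | S l => match Cantor.of_nat c with (a, b) => a :: decn l b end
  end.
Definition decl (c : nat) : list nat := match Cantor.of_nat c with (len, r) => decn len r end.
Fixpoint encn (l : list nat) : nat :=
  match l with [] => 0 | a :: l' => Cantor.to_nat (a, encn l') end.

Lemma decl_surj l : exists c, decl c = l.
Proof.
  exists (Cantor.to_nat (length l, encn l)). unfold decl. rewrite Cantor.cancel_of_to.
  induction l; cbn [decn encn length]; auto. rewrite Cantor.cancel_of_to. f_equal; auto.
Qed.

Lemma fin_list : forall n (h : Fin.t n -> nat), exists l, forall i, nth (proj1_sig (Fin.to_nat i)) l 0 = h i.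
Proof.
  induction n; intros h.
  - exists []. intros i; inversion i.
  - destruct (IHn (fun i => h (Fin.FS i))) as [l Hl]. exists (h Fin.F1 :: l).
    intros i. pattern i. apply Fin.caseS'.
    + reflexivity.
    + intros p. specialize (Hl p). simpl. destruct (Fin.to_nat p). simpl in *. auto.
Qed.

Lemma fin_args {A : Type} n (F : Fin.t n -> A) (dec : nat -> A) : (forall i, exists c, dec c = F i) ->
  exists lc, forall i, dec (nth (proj1_sig (Fin.to_nat i)) (decl lc) 0) = F i.
Proof.
  intros H. destruct (fchoice _ H) as [h Hh]. destruct (fin_list n h) as [l Hl].
  destruct (decl_surj l) as [lc Hlc]. exists lc. intros i. rewrite Hlc, Hl. auto.
Qed.

Section Count.
Variable e : nat -> symbol.
Variable Sg : symbol -> Prop.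
Hypothesis He : forall s, Sg s -> exists k, e k = s.

Fixpoint dt (fu c : nat) : term :=
  match fu with
  | 0 => tvar 0
  | S fu' =>
    match Cantor.of_nat c with
    | (0, r) => tvar r
    | (1, r) => match e r with SyConst k => tconst k | _ => tvar 0 end
    | (2, r) => match Cantor.of_nat r with (s, lc) =>
                match e s with
                | SyFun n w => tfun n w (fun i => dt fu' (nth (proj1_sig (Fin.to_nat i)) (decl lc) 0))
                | _ => tvar 0 end end
    | (3, r) => tf (dt fu' r)
    | (4, r) => match Cantor.of_nat r with (s, r2) =>
                match Cantor.of_nat r2 with (lc, c') =>
                match e s with
                | SyG n G => tG n G (fun i => dt fu' (nth (proj1_sig (Fin.to_nat i)) (decl lc) 0)) (dt fu' c')
                | _ => tvar 0 end end end
    | _ => tvar 0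
    end
  end.

Definition upclosed (P : nat -> Prop) := exists F, forall fu, F <= fu -> P fu.

Lemma dt_surj : forall t, tsyms_in Sg t -> exists F, forall fu, F <= fu -> exists c, dt fu c = t.
Proof.
  induction t as [i|k|n w args IH|t IH|n G0 args IH t IHt]; simpl; intros Hs.
  - exists 1. intros fu Hfu. destruct fu; [lia|]. exists (Cantor.to_nat (0, i)). cbn [dt].
    rewrite Cantor.cancel_of_to. auto.
  - destruct (He _ Hs) as [r Hr]. exists 1. intros fu Hfu. destruct fu; [lia|].
    exists (Cantor.to_nat (1, r)). cbn [dt]. rewrite Cantor.cancel_of_to, Hr. auto.
  - destruct Hs as [Hs1 Hs2]. destruct (He _ Hs1) as [s Hss].
    destruct (fin_bound n (fun i F => forall fu, F <= fu -> exists c, dt fu c = args i)) as [M HM].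
    + intros i N N' HN H fu Hfu. apply H. lia.
    + intros i. apply IH. apply Hs2.
    + exists (S M). intros fu Hfu. destruct fu; [lia|].
      destruct (fin_args n args (dt fu)) as [lc Hlc].
      { intros i. apply HM. lia. }
      exists (Cantor.to_nat (2, Cantor.to_nat (s, lc))). cbn [dt].
      rewrite !Cantor.cancel_of_to, Hss. f_equal. apply functional_extensionality. auto.
  - destruct Hs as [Hs1 Hs2]. destruct (He _ Hs1) as [s Hss].
    destruct (IH Hs2) as [F HF]. exists (S F). intros fu Hfu. destruct fu; [lia|].
    destruct (HF fu) as [c Hc]; [lia|].
    exists (Cantor.to_nat (3, c)). cbn [dt]. rewrite Cantor.cancel_of_to. congruence.
  - destruct Hs as [Hs1 [Hs2 Hs3]]. destruct (He _ Hs1) as [s Hss].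
    destruct (fin_bound n (fun i F => forall fu, F <= fu -> exists c, dt fu c = args i)) as [M HM].
    + intros i N N' HN H fu Hfu. apply H. lia.
    + intros i. apply IH. apply Hs2.
    + destruct (IHt Hs3) as [F HF]. exists (S (max M F)). intros fu Hfu. destruct fu; [lia|].
      destruct (fin_args n args (dt fu)) as [lc Hlc].
      { intros i. apply HM. lia. }
      destruct (HF fu) as [c Hc]; [lia|].
      exists (Cantor.to_nat (4, Cantor.to_nat (s, Cantor.to_nat (lc, c)))). cbn [dt].
      rewrite !Cantor.cancel_of_to, Hss. rewrite Hc. f_equal. apply functional_extensionality. auto.
Qed.

Definition dterm (c : nat) : term := match Cantor.of_nat c with (fu, c') => dt fu c' end.

Lemma dterm_surj t : tsyms_in Sg t -> exists c, dterm c = t.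
Proof.
  intros Hs. destruct (dt_surj t Hs) as [F HF]. destruct (HF F (le_n F)) as [c Hc].
  exists (Cantor.to_nat (F, c)). unfold dterm. rewrite Cantor.cancel_of_to. auto.
Qed.

Definition fdef : formula := fEq (tvar 0) (tvar 0).

Fixpoint df (fu c : nat) : formula :=
  match fu with
  | 0 => fdef
  | S fu' =>
    match Cantor.of_nat c with
    | (0, r) => match Cantor.of_nat r with (a, b) => fEq (dterm a) (dterm b) end
    | (1, r) => match Cantor.of_nat r with (s, lc) =>
                match e s with
                | SyPred n p => fPred n p (fun i => dterm (nth (proj1_sig (Fin.to_nat i)) (decl lc) 0))
                | _ => fdef end end
    | (2, r) => fNot (df fu' r)
    | (3, r) => match Cantor.of_nat r with (a, b) => fAnd (df fu' a) (df fu' b) end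
    | (4, r) => match Cantor.of_nat r with (a, b) => fOr (df fu' a) (df fu' b) end
    | (5, r) => match Cantor.of_nat r with (a, b) => fImp (df fu' a) (df fu' b) end
    | (6, r) => match Cantor.of_nat r with (x, a) => fEx x (df fu' a) end
    | (7, r) => match Cantor.of_nat r with (x, a) => fAll x (df fu' a) end
    | _ => fdef
    end
  end.

Lemma df_surj : forall φ, fsyms_in Sg φ -> exists F, forall fu, F <= fu -> exists c, df fu c = φ.
Proof.
  induction φ as [t1 t2|n p args|φ IH|φ IH1 ψ IH2|φ IH1 ψ IH2|φ IH1 ψ IH2|x φ IH|x φ IH];
    simpl; intros Hs.
  - destruct Hs as [H1 H2]. destruct (dterm_surj t1 H1) as [a Ha]. destruct (dterm_surj t2 H2) as [b Hb].
    exists 1. intros fu Hfu. destruct fu; [lia|].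
    exists (Cantor.to_nat (0, Cantor.to_nat (a, b))). cbn [df]. rewrite !Cantor.cancel_of_to. congruence.
  - destruct Hs as [Hs1 Hs2]. destruct (He _ Hs1) as [s Hss].
    destruct (fin_args n args dterm) as [lc Hlc].
    { intros i. apply dterm_surj. apply Hs2. }
    exists 1. intros fu Hfu. destruct fu; [lia|].
    exists (Cantor.to_nat (1, Cantor.to_nat (s, lc))). cbn [df].
    rewrite !Cantor.cancel_of_to, Hss. f_equal. apply functional_extensionality. auto.
  - destruct (IH Hs) as [F HF]. exists (S F). intros fu Hfu. destruct fu; [lia|].
    destruct (HF fu) as [c Hc]; [lia|].
    exists (Cantor.to_nat (2, c)). cbn [df]. rewrite Cantor.cancel_of_to. congruence.
  - destruct Hs as [H1 H2]. destruct (IH1 H1) as [F1 HF1]. destruct (IH2 H2) as [F2 HF2].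
    exists (S (max F1 F2)). intros fu Hfu. destruct fu; [lia|].
    destruct (HF1 fu) as [a Ha]; [lia|]. destruct (HF2 fu) as [b Hb]; [lia|].
    exists (Cantor.to_nat (3, Cantor.to_nat (a, b))). cbn [df]. rewrite !Cantor.cancel_of_to. congruence.
  - destruct Hs as [H1 H2]. destruct (IH1 H1) as [F1 HF1]. destruct (IH2 H2) as [F2 HF2].
    exists (S (max F1 F2)). intros fu Hfu. destruct fu; [lia|].
    destruct (HF1 fu) as [a Ha]; [lia|]. destruct (HF2 fu) as [b Hb]; [lia|].
    exists (Cantor.to_nat (4, Cantor.to_nat (a, b))). cbn [df]. rewrite !Cantor.cancel_of_to. congruence.
  - destruct Hs as [H1 H2]. destruct (IH1 H1) as [F1 HF1]. destruct (IH2 H2) as [F2 HF2].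
    exists (S (max F1 F2)). intros fu Hfu. destruct fu; [lia|].
    destruct (HF1 fu) as [a Ha]; [lia|]. destruct (HF2 fu) as [b Hb]; [lia|].
    exists (Cantor.to_nat (5, Cantor.to_nat (a, b))). cbn [df]. rewrite !Cantor.cancel_of_to. congruence.
  - destruct (IH Hs) as [F HF]. exists (S F). intros fu Hfu. destruct fu; [lia|].
    destruct (HF fu) as [c Hc]; [lia|].
    exists (Cantor.to_nat (6, Cantor.to_nat (x, c))). cbn [df]. rewrite !Cantor.cancel_of_to. congruence.
  - destruct (IH Hs) as [F HF]. exists (S F). intros fu Hfu. destruct fu; [lia|].
    destruct (HF fu) as [c Hc]; [lia|].
    exists (Cantor.to_nat (7, Cantor.to_nat (x, c))). cbn [df]. rewrite !Cantor.cancel_of_to. congruence.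
Qed.

Definition dform (c : nat) : formula := match Cantor.of_nat c with (fu, c') => df fu c' end.

Lemma dform_surj φ : fsyms_in Sg φ -> exists c, dform c = φ.
Proof.
  intros Hs. destruct (df_surj φ Hs) as [F HF]. destruct (HF F (le_n F)) as [c Hc].
  exists (Cantor.to_nat (F, c)). unfold dform. rewrite Cantor.cancel_of_to. auto.
Qed.
End Count.

Lemma nth_map_seq {A} (h : nat -> A) n i d : i < n -> nth i (map h (seq 0 n)) d = h i.
Proof.
  intros Hi. rewrite nth_indep with (d' := h 0) by (rewrite length_map, length_seq; lia).
  rewrite map_nth, seq_nth by lia. auto.
Qed.

Lemma assemble m X (σ : nat -> formula) (sym : nat -> symbol) (D : nat -> BSet) :
  (forall n, isDelta m (σ n) /\ sentence (σ n) /\ fsyms_in (NSg sym) (σ n)) ->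
  (forall n f, sat f env0 (σ n) <-> D n f) ->
  (forall f, (X f -> exists N, forall n, N <= n -> D n f) /\
             (~ X f -> exists N, forall n, N <= n -> ~ D n f)) ->
  guessable m X.
Proof.
  intros Hσ HD Hc.
  set (e := fun c => match Cantor.of_nat c with (0, k) => SyConst k | (_, k) => sym k end).
  assert (He : forall s, NSg sym s -> exists k, e k = s).
  { intros s [[k Hk]|[k Hk]]; subst.
    - exists (Cantor.to_nat (0, k)). unfold e. rewrite Cantor.cancel_of_to. auto.
    - exists (Cantor.to_nat (1, k)). unfold e. rewrite Cantor.cancel_of_to. auto. }
  set (Good := fun ψ => isDelta m ψ /\ sentence ψ /\ fsyms_in (NSg sym) ψ).
  set (phi := fun k => if Nat.even k then σ (Nat.div2 k) else
         if excluded_middle_informative (Good (dform e (Nat.div2 k))) then dform e (Nat.div2 k) else σ 0).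
  assert (Hphi2 : forall k, phi (2 * k) = σ k).
  { intros k. unfold phi. rewrite ev2, Nat.div2_double. auto. }
  exists (NSg sym), phi, (fun l => if nth (2 * Nat.div2 (pred (length l))) l false then 1 else 0).
  split; [exists e; exact He|]. split; [|split].
  - intros k. unfold phi. destruct (Nat.even k); [apply Hσ|].
    destruct (excluded_middle_informative _) as [Hg|_]; [exact Hg| apply Hσ].
  - intros ψ H1 H2 H3. destruct (dform_surj e (NSg sym) He ψ H3) as [c Hc'].
    exists (2 * c + 1). unfold phi. rewrite od2, dv2, Hc'.
    destruct (excluded_middle_informative _) as [_|Hn]; auto. exfalso; apply Hn. split; auto.
  - intros f. simpl.
    assert (Hv : forall n, (if nth (2 * Nat.div2 (pred (length (map (fun k => fval f (phi k)) (seq 0 (S n))))))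
                             (map (fun k => fval f (phi k)) (seq 0 (S n))) false then 1 else 0)
                         = if fval f (σ (Nat.div2 n)) then 1 else 0).
    { intros n. rewrite length_map, length_seq. simpl pred. pose proof (dvb n) as [Hb1 Hb2].
      rewrite nth_map_seq by lia. rewrite Hphi2. auto. }
    setoid_rewrite Hv. split.
    + intros Hx. destruct (proj1 (Hc f) Hx) as [N HN]. exists (2 * N). intros n Hn.
      pose proof (dvb n). destruct (fval f (σ (Nat.div2 n))) eqn:E; auto.
      exfalso. assert (HH : ~ sat f env0 (σ (Nat.div2 n))) by (rewrite <- fval_true; congruence).
      apply HH, HD, HN. lia.
    + intros Hx. destruct (proj2 (Hc f) Hx) as [N HN]. exists (2 * N). intros n Hn.
      pose proof (dvb n). destruct (fval f (σ (Nat.div2 n))) eqn:E; auto.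
      exfalso. apply fval_true in E. apply HD in E. apply (HN (Nat.div2 n)); auto. lia.
Qed.

Lemma dirA m X : guessable m X -> BDelta (S (S (pred m))) X.
Proof.
  intros [Sg [phi [G [_ [H1 [_ H2]]]]]].
  apply (guess_to_borel (pred m) phi G X); auto.
  intros k. apply delta_sets. apply H1.
Qed.

Lemma prelude j X : BDelta (S (S j)) X -> exists A B : nat -> BSet,
  (forall k, BSigma (S j) (fun g => ~ A k g)) /\ (forall k, BSigma (S j) (fun g => ~ B k g)) /\
  (forall f, X f <-> exists k, A k f) /\ (forall f, ~ X f <-> exists k, B k f).
Proof.
  intros [H1 H2]. apply BSig_SS in H1. apply BSig_SS in H2.
  destruct H1 as [A [HA1 HA2]]. destruct H2 as [B [HB1 HB2]].
  exists A, B. auto.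
Qed.

Lemma dirBS j X : BDelta (S (S j)) X -> guessable (S j) X.
Proof.
  intros HX. destruct (prelude j X HX) as [A [B [HA [HB [HXA HXB]]]]].
  destruct (fchoice _ (fun k => Dec j (A k) (HA k))) as [P HP].
  destruct (fchoice _ (fun k => Dec j (B k) (HB k))) as [Q HQ].
  assert (HP' : forall f, X f <-> exists k, forall l, P k l f).
  { intros f. rewrite HXA. split; intros [k Hk]; exists k; apply (proj2 (HP k)); auto. }
  assert (HQ' : forall f, ~ X f <-> exists k, forall l, Q k l f).
  { intros f. rewrite HXB. split; intros [k Hk]; exists k; apply (proj2 (HQ k)); auto. }
  assert (Hd : forall n, Delta (S j) (Dn P Q n)).
  { apply constr_delta; intros k l; [apply (proj1 (HP k))|apply (proj1 (HQ k))]. }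
  destruct (fchoice _ (fun n => delta_def j _ (Hd n))) as [Gs HGs].
  apply (assemble (S j) X (fun n => Qs true 0 (S j) (atom j (Gs n))) (fun n => SyG j (Gs n)) (Dn P Q)).
  - intros n. split; [apply HGs|]. split; [apply Qs_sentence|].
    apply Qs_syms. simpl. split; [split; [|split]; auto|].
    + right. exists n. auto.
    + left. exists 0. auto.
  - intros n f. apply HGs.
  - apply (constr_conv X P Q HP' HQ').
Qed.

Lemma dirB0 X : BDelta 2 X -> guessable 0 X.
Proof.
  intros HX. destruct (prelude 0 X HX) as [A [B [HA [HB [HXA HXB]]]]].
  destruct (fchoice _ (fun k => Dec0 (A k) (HA k))) as [HP HHP].
  destruct (fchoice _ (fun k => Dec0 (B k) (HB k))) as [HQ HHQ].
  set (P := fun k l (f : Baire) => ~ HP k (map f (seq 0 (S l)))).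
  set (Q := fun k l (f : Baire) => ~ HQ k (map f (seq 0 (S l)))).
  assert (HP' : forall f, X f <-> exists k, forall l, P k l f).
  { intros f. rewrite HXA. split; intros [k Hk]; exists k; apply (HHP k); auto. }
  assert (HQ' : forall f, ~ X f <-> exists k, forall l, Q k l f).
  { intros f. rewrite HXB. split; intros [k Hk]; exists k; apply (HHQ k); auto. }
  assert (Hpre : forall n f g, (forall x, x < S n -> g x = f x) -> (Dn P Q n f <-> Dn P Q n g)).
  { apply constr_prefix; intros k l f g Hfg; unfold P, Q; rewrite (map_agree f g (S l) Hfg); tauto. }
  destruct (fchoice _ (fun n => qfs_def n (Dn P Q n) (Hpre n))) as [Hs HHs].
  apply (assemble 0 X (fun n => qfs n (Hs n)) (fun n => SyG 0 (fun _ l => Hs n l)) (Dn P Q)).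
  - intros n. split; [simpl; auto|]. split; [apply qfs_sentence|].
    simpl. split; [split; [|split]|].
    + right. exists n. auto.
    + intros i. inversion i.
    + left. exists n. auto.
    + left. exists 0. auto.
  - intros n f. apply HHs.
  - apply (constr_conv X P Q HP' HQ').
Qed.

Theorem mainTheorem1 (S : BSet) :
  (guessable 0 S <-> BDelta 2 S) /\
  (forall m : nat, 0 < m -> (guessable m S <-> BDelta (m + 1) S)).
Proof.
  split.
  - split; [apply dirA|apply dirB0].
  - intros m Hm. destruct m as [|j]; [lia|]. replace (Datatypes.S j + 1) with (Datatypes.S (Datatypes.S j)) by lia.
    split; [apply dirA|apply dirBS].
Qed.
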